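(* Let $L_1,L_2\subseteq\Sigma^*$ be regular languages with $L_1\subseteq\bigcup_{\alpha\in\Sigma^\kappa}\Sigma^*\alpha\Sigma^*\bar\alpha$ and $L_2\subseteq\bigcup_{\alpha\in\Sigma^\kappa}\alpha\Sigma^*\bar\alpha\Sigma^*$. Let $\lambda=\max\{\lambda_{L_1},\lambda_{L_2}\}$ and let $\eta=\lambda_{\mathcal{H}_\kappa(L_1,L_2)}$. Then: (i) $\sqrt{\lambda}\le\eta\le\lambda$. In particular, the growth of $\mathcal{H}_\kappa(L_1,L_2)$ is exponential (resp. polynomial, finite) if and only if the maximum growth of $L_1$ and $L_2$ is exponential (resp. polynomial, finite). (ii) If $\mathcal{H}_\kappa(L_1,L_2)$ is regular, then $\eta=\lambda$.
   Context: $\Sigma$ is a finite alphabet with at least two letters equipped with an involution $a\mapsto\bar a$ (a bijection with $\bar{\bar a}=a$), extended to words by $\overline{a_1\cdots a_m}=\bar a_m\cdots\bar a_1$. $\kappa$ is a fixed positive integer. The hairpin completion is $\mathcal{H}_\kappa(L_1,L_2)=\{\gamma\alpha\beta\bar\alpha\bar\gamma:\gamma,\alpha,\beta\in\Sigma^*,\ |\alpha|\ge\kappa,\ \gamma\alpha\beta\bar\alpha\in L_1\text{ or }\alpha\beta\bar\alpha\bar\gamma\in L_2\}$. For a language $L$, its growth indicator is $\lambda_L=\inf\{\lambda\in\mathbb{R}_{\ge0}:\exists c>0\ \forall m\in\mathbb{N}: |L\cap\Sigma^m|\le c\lambda^m\}$. The growth of $L$ is called exponential if $\lambda_L>1$,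 polynomial (sub-exponential but infinite) if $\lambda_L=1$, and finite if $\lambda_L=0$ (for regular and unambiguous linear languages these are the only possibilities). *)

(* Defs.v *)
From HB Require Import structures.
From mathcomp Require Import all_boot all_order all_algebra.
From mathcomp Require Import boolp classical_sets reals.
Set Implicit Arguments. Unset Strict Implicit. Unset Printing Implicit Defensive.
Import Order.TTheory GRing.Theory Num.Theory.
Local Open Scope ring_scope.
Local Open Scope classical_set_scope.

Definition lang (S : finType) := seq S -> Prop.

Definition wbar (S : finType) (inv : S -> S) (w : seq S) : seq S := rev (map inv w).

Definition regular (S : finType) (L : lang S) : Prop :=
  exists (Q : finType) (q0 : Q) (d : Q -> S -> Q) (F : pred Q),
    forall w, L w <-> F (foldl d q0 w).

Definition hairpin (S : finType) (inv : S -> S) (kappa : nat) (L1 L2 : lang S) : lang S :=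
  fun w => exists gam alp bet : seq S,
    (kappa <= size alp)%N /\
    w = gam ++ alp ++ bet ++ wbar inv alp ++ wbar inv gam /\
    (L1 (gam ++ alp ++ bet ++ wbar inv alp) \/
     L2 (alp ++ bet ++ wbar inv alp ++ wbar inv gam)).

Definition count_len (S : finType) (L : lang S) (m : nat) : nat :=
  #|[set t : m.-tuple S | `[< L (tval t) >]]|.

Definition growth (R : realType) (S : finType) (L : lang S) : R :=
  inf [set l : R | 0 <= l /\
        exists2 c : R, 0 < c & forall m : nat, (count_len L m)%:R <= c * l ^+ m].

(* Main.v *)
Require Import Defs.
From HB Require Import structures.
From mathcomp Require Import all_boot all_order all_algebra.
From mathcomp Require Import boolp classical_sets reals.
From mathcomp Require Import lra ring zify.
Import Order.TTheory GRing.Theory Num.Theory.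

Module GrowthM.
Local Open Scope ring_scope.
Local Open Scope classical_set_scope.

Section Growth.
Variable R : realType.

Definition Sg (f : nat -> nat) : set R := [set l : R | 0 <= l /\
   exists2 c : R, 0 < c & forall m : nat, (f m)%:R <= c * l ^+ m].
Definition Gr f := inf (Sg f).

Lemma Sg_lb f : has_lbound (Sg f).
Proof. by exists 0 => l [] . Qed.

Lemma Gr_le f l : Sg f l -> Gr f <= l.
Proof. by move=> H; apply: (ge_inf (Sg_lb f)). Qed.

Lemma Gr_ge0 f : Sg f !=set0 -> 0 <= Gr f.
Proof. by move=> ne; apply: lb_le_inf => // l []. Qed.

Lemma Gr_lt f x : Sg f !=set0 -> Gr f < x -> exists2 l, Sg f l & l < x.
Proof. by move=> ne; apply: inf_lt. Qed.

Lemma expr_le (a b : R) m : 0 <= a -> a <= b -> a ^+ m <= b ^+ m.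
Proof.
move=> a0 ab; elim: m => [|m IH]; first by rewrite !expr0.
rewrite !exprS; apply: ler_pM => //; exact: exprn_ge0.
Qed.

Lemma expr_mono (a : R) i j : 1 <= a -> (i <= j)%N -> a ^+ i <= a ^+ j.
Proof.
move=> a1 ij; rewrite -(subnKC ij) exprD -{1}[a ^+ i]mulr1.
apply: ler_pM => //; first by apply: exprn_ge0; apply: le_trans a1.
exact: exprn_ege1.
Qed.

Lemma Sg_up f l l' : Sg f l -> l <= l' -> Sg f l'.
Proof.
move=> [l0 [c c0 H]] ll'; split; first exact: le_trans ll'.
exists c => // m; apply: (le_trans (H m)); rewrite ler_pM2l //.
exact: expr_le.
Qed.

Lemma bern_down (s : R) n : 0 <= s -> s <= 1 ->
  (1 - s) ^+ n * (1 + n%:R * s) <= 1.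
Proof.
move=> s0 s1; elim: n => [|n IH]; first by rewrite expr0 mul0r addr0 mulr1.
have e0 : 0 <= (1 - s) ^+ n by apply: exprn_ge0; rewrite subr_ge0.
rewrite exprS -addn1 natrD; move: IH e0; set e := (1 - s) ^+ n => IH e0.
have n0 : 0 <= n%:R :> R by [].
have h : 0 <= e * ((n%:R + 1) * (s * s)).
  by apply: mulr_ge0 => //; apply: mulr_ge0; [lra|nra].
nra.
Qed.

Lemma EZ1 f l : Sg f l -> l < 1 -> exists N, forall n, (N <= n)%N -> f n = 0%N.
Proof.
move=> [l0 [c c0 H]] l1.
set s := 1 - l.
have s0 : 0 < s by rewrite /s subr_gt0.
have cs0 : 0 <= c / s by apply: divr_ge0; apply: ltW.
exists (Num.Def.archi_bound (c / s)) => n Nn.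
have hN := archi_boundP cs0.
have hn : c / s < n%:R.
  by apply: lt_le_trans hN _; rewrite ler_nat.
have hns : c < n%:R * s by rewrite -ltr_pdivrMr.
have hb : (1 - s) ^+ n * (1 + n%:R * s) <= 1.
  by apply: bern_down; rewrite /s; lra.
have := H n.
have ln := exprn_ge0 n l0.
have ls : l = 1 - s by rewrite /s opprB addrC subrK.
rewrite ls in ln *.
move: ln hb; set e := (1 - s) ^+ n => ln hb fn.
have : (f n)%:R < 1 :> R.
  have n0 : 0 <= n%:R :> R by [].
  have h1 : 0 <= (f n)%:R :> R by [].
  nra.
by rewrite ltrn1; case: (f n).
Qed.

Lemma EZ2 f N : (forall n, (N <= n)%N -> f n = 0%N) ->
  forall l : R, 0 < l -> Sg f l.
Proof.
move=> HN l l0; split; first exact: ltW.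
have t0 : forall i, 0 <= (f i)%:R / l ^+ i :> R.
  by move=> i; apply: divr_ge0 => //; apply: exprn_ge0; apply: ltW.
exists (1 + \sum_(i < N) (f i)%:R / l ^+ i).
  by apply: (@lt_le_trans _ _ 1) => //; rewrite lerDl; apply: sumr_ge0 => i _; apply: t0.
move=> m; have lm : 0 < l ^+ m by apply: exprn_gt0.
case: (ltnP m N) => mN.
  rewrite -ler_pdivrMr // (bigD1 (Ordinal mN)) //= addrA.
  have : 0 <= \sum_(i < N | i != Ordinal mN) (f i)%:R / l ^+ i by apply: sumr_ge0 => i _; apply: t0.
  lra.
rewrite HN //; apply: mulr_ge0; last exact: ltW.
by apply: addr_ge0 => //; apply: sumr_ge0 => i _; apply: t0.
Qed.

Lemma poly_abs (l l' : R) : 0 < l -> l < l' ->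
  exists2 C : R, 0 < C & forall m : nat, (m.+1)%:R * l ^+ m <= C * l' ^+ m.
Proof.
move=> l0 ll'.
have l'0 : 0 < l' by apply: lt_trans ll'.
set r := l / l'.
have r0 : 0 < r by apply: divr_gt0.
have r1 : r < 1 by rewrite ltr_pdivrMr // mul1r.
set s := 1 - r.
have s0 : 0 < s by rewrite /s subr_gt0.
have ss : s * s^-1 = 1 by rewrite divff // gt_eqF.
have si0 : 0 < s^-1 by rewrite invr_gt0.
exists (1 + s^-1); first by lra.
move=> m.
have -> : l = r * l' by rewrite /r mulrAC -mulrA divff ?mulr1 // gt_eqF.
rewrite exprMn mulrA ler_pM2r; last exact: exprn_gt0.
have hb : r ^+ m * (1 + m%:R * s) <= 1.
  have -> : r = 1 - s by rewrite /s opprB addrC subrK.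
  by apply: bern_down; rewrite /s; lra.
have rm := exprn_ge0 m (ltW r0).
move: hb rm; set e := r ^+ m => hb rm.
have n0 : 0 <= m%:R :> R by [].
rewrite -addn1 natrD.
have h2 : (m%:R + 1) <= (1 + s^-1) * (1 + m%:R * s).
  have -> : (1 + s^-1) * (1 + m%:R * s) = 1 + m%:R * s + s^-1 + m%:R * (s * s^-1) by ring.
  rewrite ss; nra.
nra.
Qed.

Lemma le_gtP' (x y : R) : (forall z, y < z -> x <= z) -> x <= y.
Proof.
move=> H; apply/ler_addgt0Pr => e e0; apply: H; by rewrite ltrDl.
Qed.

Lemma GL_R f g N : Sg g !=set0 ->
  (forall n, (f n <= \sum_(j < N) g (n + j))%N) -> Gr f <= Gr g.
Proof.
move=> ne H; apply: le_gtP' => z gz; have [l [l0 [c c0 Hc]] lz] := Gr_lt _ _ ne gz.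
apply: le_trans (ltW lz); apply: Gr_le; split => //.
have sp : 0 <= \sum_(j < N) l ^+ j by apply: sumr_ge0 => j _; apply: exprn_ge0.
exists (c * (1 + \sum_(j < N) l ^+ j)); first by apply: mulr_gt0 => //; lra.
move=> n; apply: le_trans (_ : (\sum_(j < N) g (n + j))%:R <= _).
  by rewrite ler_nat.
rewrite natr_sum; apply: le_trans (_ : \sum_(j < N) c * l ^+ (n + j) <= _).
  by apply: ler_sum => j _; apply: Hc.
rewrite -mulr_sumr -mulrA ler_pM2l // mulrDl mul1r.
under eq_bigr do rewrite exprD.
rewrite -mulr_sumr mulrC lerDr; exact: exprn_ge0.
Qed.

Lemma GL_Lo f g : Sg g !=set0 ->
  (forall n, (f n <= \sum_(j < n.+1) g (n + j))%N) -> Num.sqrt (Gr f) <= Gr g.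
Proof.
move=> ne H; apply: le_gtP' => z gz.
have z0 : 0 < z by apply: le_lt_trans gz; apply: Gr_ge0.
have [l [l0 [c c0 Hc]] lz] := Gr_lt _ _ ne gz.
suff Hs : Sg f (z ^+ 2).
  have := Gr_le _ _ Hs => /ler_wsqrtr; rewrite sqrtr_sqr ger0_norm //; exact: ltW.
case: (ltP 1 z) => z1.
  set l1 := Num.max l 1.
  have l11 : 1 <= l1 by rewrite le_max lexx orbT.
  have l1z : l1 < z by rewrite gt_max lz z1.
  have l10 : 0 < l1 by apply: lt_le_trans l11.
  have l1l : l <= l1 by rewrite le_max lexx.
  have [_ [c1 c10 Hc1]] := Sg_up _ _ _ (conj l0 (ex_intro2 _ _ c c0 Hc)) l1l.
  have [C C0 HC] := poly_abs _ _ (exprn_gt0 2 l10) (ltrXn2r 2 (ltW l10) l1z).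
  split; first by apply: exprn_ge0; apply: ltW.
  exists (c1 * C); first exact: mulr_gt0.
  move=> n; apply: le_trans (_ : (\sum_(j < n.+1) g (n + j))%:R <= _).
    by rewrite ler_nat.
  rewrite natr_sum; apply: le_trans (_ : \sum_(j < n.+1) c1 * (l1 ^+ 2) ^+ n <= _).
    apply: ler_sum => j _; apply: le_trans (Hc1 _) _; rewrite ler_pM2l //.
    rewrite -exprM mul2n -addnn; apply: expr_mono => //.
    by rewrite leq_add2l -ltnS.
  rewrite sumr_const card_ord -mulr_natl mulrA (mulrC _ c1) -mulrA -mulrA.
  by rewrite ler_pM2l //.
have l1 : l < 1 by apply: lt_le_trans z1.
have [N HN] := EZ1 _ _ (conj l0 (ex_intro2 _ _ c c0 Hc)) l1.
apply: (@EZ2 f N); last exact: exprn_gt0.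
move=> n Nn; apply/eqP; rewrite -leqn0; apply: leq_trans (H n) _.
rewrite leqn0 sum_nat_eq0; apply/forallP => j; apply/implyP => _.
by rewrite HN // (leq_trans Nn) // leq_addr.
Qed.

Lemma GL_U f g1 g2 : Sg g1 !=set0 -> Sg g2 !=set0 ->
  (forall m, (f m <= \sum_(j < m.+1)
      (if (j.*2 <= m)%N then g1 (m - j) + g2 (m - j) else 0))%N) ->
  Gr f <= Num.max (Gr g1) (Gr g2).
Proof.
move=> ne1 ne2 H; apply: le_gtP' => z.
rewrite gt_max => /andP [gz1 gz2].
have z0 : 0 < z by apply: le_lt_trans gz1; apply: Gr_ge0.
have [l1 [l10 [c1 c10 Hc1]] lz1] := Gr_lt _ _ ne1 gz1.
have [l2 [l20 [c2 c20 Hc2]] lz2] := Gr_lt _ _ ne2 gz2.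
apply: Gr_le.
case: (ltP 1 z) => z1.
  set l := Num.max (Num.max l1 l2) 1.
  have l11 : 1 <= l by rewrite le_max lexx orbT.
  have lz : l < z by rewrite !gt_max lz1 lz2 z1.
  have l0 : 0 < l by apply: lt_le_trans l11.
  have h1 : l1 <= l by rewrite /l !le_max lexx.
  have h2 : l2 <= l by rewrite /l !le_max lexx !orbT.
  have [_ [d1 d10 Hd1]] := Sg_up _ _ _ (conj l10 (ex_intro2 _ _ c1 c10 Hc1)) h1.
  have [_ [d2 d20 Hd2]] := Sg_up _ _ _ (conj l20 (ex_intro2 _ _ c2 c20 Hc2)) h2.
  have [C C0 HC] := poly_abs _ _ l0 lz.
  split; first exact: ltW.
  exists ((d1 + d2) * C); first by apply: mulr_gt0 => //; apply: addr_gt0.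
  move=> m; apply: le_trans (_ : (\sum_(j < m.+1)
      (if (j.*2 <= m)%N then g1 (m - j) + g2 (m - j) else 0))%:R <= _).
    by rewrite ler_nat.
  rewrite natr_sum; apply: le_trans (_ : \sum_(j < m.+1) (d1 + d2) * l ^+ m <= _).
    apply: ler_sum => j _; case: ifP => _.
      rewrite natrD mulrDl; apply: lerD.
        apply: le_trans (Hd1 _) _; rewrite ler_pM2l //; apply: expr_mono => //.
        exact: leq_subr.
      apply: le_trans (Hd2 _) _; rewrite ler_pM2l //; apply: expr_mono => //.
      exact: leq_subr.
    apply: mulr_ge0; [apply: addr_ge0; exact: ltW | apply: exprn_ge0; exact: ltW].
  rewrite sumr_const card_ord -mulr_natl mulrA (mulrC _ (d1 + d2)) -mulrA -mulrA.
  by rewrite ler_pM2l //; apply: addr_gt0.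
have [N1 HN1] := EZ1 _ _ (conj l10 (ex_intro2 _ _ c1 c10 Hc1)) (lt_le_trans lz1 z1).
have [N2 HN2] := EZ1 _ _ (conj l20 (ex_intro2 _ _ c2 c20 Hc2)) (lt_le_trans lz2 z1).
apply: (@EZ2 f (N1 + N2).*2) => //.
move=> m Nm; apply/eqP; rewrite -leqn0; apply: leq_trans (H m) _.
rewrite leqn0 sum_nat_eq0; apply/forallP => j; apply/implyP => _.
case: ifP => // hj.
have hmj : (N1 + N2 <= m - j)%N.
  rewrite leq_subRL; last by apply: leq_trans hj; rewrite -addnn leq_addr.
  lia.
rewrite HN1; last by apply: leq_trans hmj; exact: leq_addr.
by rewrite HN2 //; apply: leq_trans hmj; exact: leq_addl.
Qed.

End Growth.

End GrowthM.
Import GrowthM.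

Module CombM.

Section Comb.
Variables (S : finType) (x0 : S).

Lemma count_lenE (L : lang S) m :
  count_len L m = #|[set t : m.-tuple S | `[< L t >]]|%SET.
Proof.
apply: eq_card => t; rewrite inE /in_mem /= /classical_sets.in_set.
by apply/idP/idP => [/asboolP/asboolP H | /asboolP H]; apply/asboolP => //; apply/asboolP.
Qed.

Definition dtup n : n.-tuple S := [tuple of nseq n x0].

Lemma inE_as n (P : seq S -> Prop) (t : n.-tuple S) :
  (t \in [set t : n.-tuple S | `[< P t >]]) = `[< P t >].
Proof. by rewrite inE. Qed.

Lemma count_len_le (L : lang S) m : (count_len L m <= #|S| ^ m)%N.
Proof. by rewrite count_lenE -card_tuple; apply: max_card. Qed.

Lemma inj_count (L : lang S) m n (P : seq S -> Prop) (phi : seq S -> seq S) :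
  (forall t : m.-tuple S, P t -> L (phi t) /\ size (phi t) = n) ->
  (forall t t' : m.-tuple S, P t -> P t' -> phi t = phi t' -> t = t' :> seq S) ->
  (#|[set t : m.-tuple S | `[< P t >]]| <= count_len L n)%N.
Proof.
move=> H1 H2.
pose psi (t : m.-tuple S) : n.-tuple S := insubd (dtup n) (phi t).
have vpsi (t : m.-tuple S) : P t -> val (psi t) = phi t.
  by move=> Pt; rewrite val_insubd (H1 t Pt).2 eqxx.
rewrite -(@card_in_imset _ _ psi); last first.
  move=> t t'; rewrite !inE => /asboolP Pt /asboolP Pt' e.
  have Pt1 : P t by apply/asboolP.
  have Pt1' : P t' by apply/asboolP.
  apply: val_inj; apply: H2 => //; by rewrite -(vpsi t) // -(vpsi t') // e.
rewrite count_lenE; apply: subset_leq_card; apply/fintype.subsetP => u /imsetP [t].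
rewrite inE => /asboolP Pt ->; rewrite inE; apply/asboolP.
by rewrite vpsi //; case: (H1 t Pt).
Qed.

Lemma prefix_count (L : lang S) n g :
  (#|[set t : n.-tuple S | `[< exists s, size s = g /\ L (t ++ s) >]]|
     <= count_len L (n + g))%N.
Proof.
pose f (t : (n + g).-tuple S) : n.-tuple S := insubd (dtup n) (take n t).
rewrite count_lenE; apply: leq_trans (leq_imset_card f _).
apply: subset_leq_card; apply/fintype.subsetP => t; rewrite inE => /asboolP [s [sg Ls]].
apply/imsetP; exists (insubd (dtup (n + g)) (t ++ s)).
  rewrite inE; apply/asboolP.
  by rewrite val_insubd size_cat size_tuple sg eqxx.
apply: val_inj; rewrite /f !val_insubd size_cat size_tuple sg eqxx.
by rewrite take_size_cat ?size_tuple // eqxx.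
Qed.

Lemma suffix_count (L : lang S) n g :
  (#|[set t : n.-tuple S | `[< exists s, size s = g /\ L (s ++ t) >]]|
     <= count_len L (g + n))%N.
Proof.
pose f (t : (g + n).-tuple S) : n.-tuple S := insubd (dtup n) (drop g t).
rewrite count_lenE; apply: leq_trans (leq_imset_card f _).
apply: subset_leq_card; apply/fintype.subsetP => t; rewrite inE => /asboolP [s [sg Ls]].
apply/imsetP; exists (insubd (dtup (g + n)) (s ++ t)).
  rewrite inE; apply/asboolP.
  by rewrite val_insubd size_cat size_tuple sg eqxx.
apply: val_inj; rewrite /f !val_insubd size_cat size_tuple sg eqxx.
by rewrite drop_size_cat ?size_tuple // eqxx.
Qed.

Lemma union_bound (L : lang S) n K (P : nat -> seq S -> Prop) :
  (forall t : n.-tuple S, L t -> exists i, (i < K)%N /\ P i t) ->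
  (count_len L n <= \sum_(i < K) #|[set t : n.-tuple S | `[< P i t >]]|)%N.
Proof.
move=> H.
have U : forall K, (#|[set t : n.-tuple S | `[< exists i, (i < K)%N /\ P i t >]]|
   <= \sum_(i < K) #|[set t : n.-tuple S | `[< P i t >]]|)%N.
  elim=> [|k IH].
    rewrite big_ord0 leqn0 cards_eq0; apply/eqP/setP => t.
    by rewrite !inE; apply/asboolP => -[i []].
  rewrite big_ord_recr /=; apply: leq_trans (leq_add IH (leqnn _)).
  apply: leq_trans (leq_card_setU _ _); apply: subset_leq_card.
  apply/fintype.subsetP => t; rewrite !inE => -[i [ik Pi]].
  rewrite ltnS leq_eqVlt in ik; case/orP: ik => [/eqP eik | ik].
    by apply/orP; right; apply/asboolP; rewrite -eik.
  by apply/orP; left; apply/asboolP; exists i.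
rewrite count_lenE; apply: leq_trans (U K); apply: subset_leq_card; apply/fintype.subsetP => t.
by rewrite !inE => Lt; apply: H.
Qed.


Lemma short_path (Q : finType) (d : Q -> S -> Q) q (x : seq S) :
  exists y : seq S, (size y < #|Q|)%N /\ foldl d q y = foldl d q x.
Proof.
elim: {x}(size x).+1 {-2}x (ltnSn (size x)) => // N IH x Hx.
case: (ltnP (size x) #|Q|) => hx; first by exists x.
pose f (i : 'I_(size x).+1) := foldl d q (take i x).
have [i [j [fij nij]]] : exists i j, f i = f j /\ i != j.
  apply: contrapT => H'.
  have finj : injective f.
    move=> i j fij; apply/eqP; apply: contrapT => nij; apply: H'.
    by exists i, j; split => //; apply/negP.
  by move: (leq_card f finj); rewrite card_ord ltnNge hx.
have key : forall a b : 'I_(size x).+1, f a = f b -> (a < b)%N ->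
    exists y : seq S, (size y < #|Q|)%N /\ foldl d q y = foldl d q x.
  move=> a b fab ab.
  have hb : (b <= size x)%N by rewrite -ltnS.
  have hs : (size (take a x ++ drop b x) < N)%N.
    rewrite size_cat size_take size_drop.
    have ha : (a < size x)%N by apply: leq_trans ab hb.
    rewrite ha; rewrite ltnS in Hx; lia.
  have [y [sy ey]] := IH _ hs.
  exists y; split => //; rewrite ey foldl_cat.
  rewrite -/(f a) fab /f -foldl_cat cat_take_drop //.
case: (ltngtP i j) => [ij | ji | /val_inj e ].
- exact: key fij ij.
- exact: key (esym fij) ji.
- by rewrite e eqxx in nij.
Qed.

End Comb.

End CombM.
Import CombM.

Module MainM.

Section Main.
Variables (S : finType) (x0 : S) (inv : S -> S) (invK : involutive inv).
Variables (kappa : nat) (L1 L2 : lang S).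
Hypothesis H1 : forall w, L1 w -> exists alp u v : seq S,
       size alp = kappa /\ w = u ++ alp ++ v ++ wbar inv alp.
Hypothesis H2 : forall w, L2 w -> exists alp u v : seq S,
       size alp = kappa /\ w = alp ++ u ++ wbar inv alp ++ v.

Local Notation H := (hairpin inv kappa L1 L2).

Lemma size_wbar w : size (wbar inv w) = size w.
Proof. by rewrite /wbar size_rev size_map. Qed.

Lemma wbarK w : wbar inv (wbar inv w) = w.
Proof. by rewrite /wbar map_rev revK (mapK invK). Qed.

Lemma hp1 u alp v : size alp = kappa -> L1 (u ++ alp ++ v ++ wbar inv alp) ->
  H ((u ++ alp ++ v ++ wbar inv alp) ++ wbar inv u).
Proof.
move=> sa L; exists u, alp, v; split; first by rewrite sa.
by split; [rewrite -!catA | left].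
Qed.

Lemma hp2 u alp v : size alp = kappa -> L2 (alp ++ u ++ wbar inv alp ++ v) ->
  H (wbar inv v ++ (alp ++ u ++ wbar inv alp ++ v)).
Proof.
move=> sa L; exists (wbar inv v), alp, u; split; first by rewrite sa.
by rewrite wbarK; split; [| right].
Qed.

Lemma low1 n : (count_len L1 n <= \sum_(j < n.+1) count_len H (n + j))%N.
Proof.
apply: leq_trans (@union_bound S L1 n n.+1 (fun j (t : seq S) =>
   exists s, size s = j /\ H (t ++ s)) _) _.
  move=> t Lt; have [alp [u [v [sa et]]]] := H1 _ Lt; exists (size u); split.
    by rewrite ltnS -(size_tuple t) et size_cat leq_addr.
  exists (wbar inv u); split; first exact: size_wbar.
  by rewrite et; apply: hp1 => //; rewrite -et.
apply: leq_sum => j _; exact: (@prefix_count S x0).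
Qed.


Lemma low2 n : (count_len L2 n <= \sum_(j < n.+1) count_len H (n + j))%N.
Proof.
apply: leq_trans (@union_bound S L2 n n.+1 (fun j (t : seq S) =>
   exists s, size s = j /\ H (s ++ t)) _) _.
  move=> t Lt; have [alp [u [v [sa et]]]] := H2 _ Lt; exists (size v); split.
    by rewrite ltnS -(size_tuple t) et !size_cat !addnA leq_addl.
  exists (wbar inv v); split; first exact: size_wbar.
  by rewrite et; apply: hp2 => //; rewrite -et.
apply: leq_sum => j _; rewrite addnC; exact: (@suffix_count S x0).
Qed.

Lemma reg1 : regular H -> exists N, forall n,
  (count_len L1 n <= \sum_(j < N) count_len H (n + j))%N.
Proof.
move=> [Q [q0 [d [F HF]]]]; exists #|Q| => n.
apply: leq_trans (@union_bound S L1 n #|Q| (fun j (t : seq S) =>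
   exists s, size s = j /\ H (t ++ s)) _) _.
  move=> t Lt; have [alp [u [v [sa et]]]] := H1 _ Lt.
  have hz : H (t ++ wbar inv u) by rewrite et; apply: hp1 => //; rewrite -et.
  have [y [sy ey]] := @short_path S Q d (foldl d q0 t) (wbar inv u).
  exists (size y); split => //; exists y; split => //.
  by apply/HF; rewrite foldl_cat ey -foldl_cat; apply/HF.
apply: leq_sum => j _; exact: (@prefix_count S x0).
Qed.

Lemma reg2 : regular H -> exists N, forall n,
  (count_len L2 n <= \sum_(j < N) count_len H (n + j))%N.
Proof.
move=> [Q [q0 [d [F HF]]]]; exists #|Q| => n.
apply: leq_trans (@union_bound S L2 n #|Q| (fun j (t : seq S) =>
   exists s, size s = j /\ H (s ++ t)) _) _.
  move=> t Lt; have [alp [u [v [sa et]]]] := H2 _ Lt.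
  have hz : H (wbar inv v ++ t) by rewrite et; apply: hp2 => //; rewrite -et.
  have [y [sy ey]] := @short_path S Q d q0 (wbar inv v).
  exists (size y); split => //; exists y; split => //.
  by apply/HF; rewrite foldl_cat ey -foldl_cat; apply/HF.
apply: leq_sum => j _; rewrite addnC; exact: (@suffix_count S x0).
Qed.


Definition Q1 m j (z : seq S) :=
  exists w, size w = (m - j)%N /\ L1 w /\ z = w ++ wbar inv (take j w).
Definition Q2 m j (z : seq S) := (j.*2 <= m)%N /\
  exists w, size w = (m - j)%N /\ L2 w /\ z = wbar inv (drop (m - j - j) w) ++ w.

Lemma cQ1 m j : (#|[set t : m.-tuple S | `[< Q1 m j t >]]| <= count_len L1 (m - j))%N.
Proof.
apply: (@inj_count S x0 L1 m (m - j) (Q1 m j) (take (m - j))).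
  move=> t [w [sw [Lw ->]]]; rewrite take_size_cat //.
move=> t t' [w [sw [Lw et]]] [w' [sw' [Lw' et']]].
rewrite et et' !take_size_cat // => ->; done.
Qed.

Lemma cQ2 m j : (#|[set t : m.-tuple S | `[< Q2 m j t >]]| <= count_len L2 (m - j))%N.
Proof.
apply: (@inj_count S x0 L2 m (m - j) (Q2 m j) (drop j)).
  move=> t [hj [w [sw [Lw ->]]]]; rewrite drop_size_cat //.
  by rewrite size_wbar size_drop sw; lia.
move=> t t' [hj [w [sw [Lw et]]]] [_ [w' [sw' [Lw' et']]]].
rewrite et et' !drop_size_cat ?size_wbar ?size_drop ?sw ?sw' //; try lia.
by move=> ->.
Qed.

Lemma up m : (count_len H m <= \sum_(j < m.+1)
      (if (j.*2 <= m)%N then count_len L1 (m - j) + count_len L2 (m - j) else 0))%N.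
Proof.
apply: leq_trans (@union_bound S H m m.+1 (fun j (t : seq S) =>
   (j.*2 <= m)%N /\ (Q1 m j t \/ Q2 m j t)) _) _.
  move=> t [gam [alp [bet [ka [et Hor]]]]].
  have sz : size (tval t) = m by rewrite size_tuple.
  rewrite et !size_cat !size_wbar in sz.
  have hj : ((size gam).*2 <= m)%N by lia.
  exists (size gam); split; first by lia.
  split => //; case: Hor => L.
    left; exists (gam ++ alp ++ bet ++ wbar inv alp); split.
      by rewrite !size_cat size_wbar; lia.
    by split => //; rewrite take_size_cat // et -!catA.
  right; split => //; exists (alp ++ bet ++ wbar inv alp ++ wbar inv gam); split.
    by rewrite !size_cat !size_wbar; lia.
  split => //; rewrite et.
  have -> : alp ++ bet ++ wbar inv alp ++ wbar inv gam =
     (alp ++ bet ++ wbar inv alp) ++ wbar inv gam by rewrite -!catA.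
  rewrite drop_size_cat ?wbarK //.
  by rewrite !size_cat size_wbar; lia.
apply: leq_sum => j _; case: ifP => hj.
  apply: leq_trans (leq_add (cQ1 m j) (cQ2 m j)).
  apply: leq_trans (leq_card_setU _ _); apply: subset_leq_card.
  apply/fintype.subsetP => t; rewrite !inE => -[_ [q|q]]; apply/orP; [left|right];
    apply/asboolP => //.
rewrite leqn0 cards_eq0; apply/eqP/setP => t.
by rewrite !inE; apply/asboolP => -[]; move=> hj2; rewrite hj2 in hj.
Qed.

End Main.

End MainM.
Import MainM.

Module ArithM.
Local Open Scope ring_scope.

Lemma final_arith (R : realType) (lam eta : R) : 0 <= lam ->
  Num.sqrt lam <= eta -> eta <= lam ->
  ((1 < eta <-> 1 < lam) /\ (eta = 1 <-> lam = 1) /\ (eta = 0 <-> lam = 0)).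
Proof.
move=> l0; have := sqr_sqrtr l0; have := sqrtr_ge0 lam.
move: (Num.sqrt lam) => s s0 <- h1 h2.
rewrite expr2 in h2 *.
split; [split=> h; nra|split; split=> h; nra].
Qed.


End ArithM.
Import ArithM.

Local Open Scope ring_scope.

Theorem theorem3 (R : realType) (S : finType) (inv : S -> S) (kappa : nat)
    (L1 L2 : lang S) :
  (1 < #|S|)%N -> involutive inv -> (0 < kappa)%N ->
  regular L1 -> regular L2 ->
  (forall w, L1 w -> exists alp u v : seq S,
       size alp = kappa /\ w = u ++ alp ++ v ++ wbar inv alp) ->
  (forall w, L2 w -> exists alp u v : seq S,
       size alp = kappa /\ w = alp ++ u ++ wbar inv alp ++ v) ->
  let lam : R := Num.max (growth R L1) (growth R L2) in
  let eta : R := growth R (hairpin inv kappa L1 L2) in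
  ((Num.sqrt lam <= eta /\ eta <= lam) /\
   ((1 < eta <-> 1 < lam) /\ (eta = 1 <-> lam = 1) /\ (eta = 0 <-> lam = 0))) /\
  (regular (hairpin inv kappa L1 L2) -> eta = lam).
Proof.
move=> S1 invK k0 _ _ HL1 HL2 lam eta.
have [x0 _] : exists x : S, x \in S by apply/card_gt0P; apply: ltnW.
have ne : forall L : lang S, (Sg R (count_len L) !=set0)%classic.
  move=> L; exists #|S|%:R; split => //; exists 1 => // m.
  by rewrite mul1r -natrX ler_nat count_len_le.
have gE : forall L : lang S, growth R L = Gr R (count_len L) by [].
have e0 : 0 <= eta by rewrite /eta gE; apply: Gr_ge0.
have l0 : 0 <= lam by rewrite /lam le_max !gE Gr_ge0.
have lo1 : Num.sqrt (growth R L1) <= eta.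
  by rewrite gE; apply: GL_Lo => //; exact: (@low1 S x0 inv kappa L1 L2 HL1).
have lo2 : Num.sqrt (growth R L2) <= eta.
  by rewrite gE; apply: GL_Lo => //; exact: (@low2 S x0 inv invK kappa L1 L2 HL2).
have hup : eta <= lam.
  by rewrite /eta /lam !gE; apply: GL_U => //; exact: (@up S x0 inv invK kappa L1 L2).
have hlo : Num.sqrt lam <= eta.
  by rewrite /lam /Num.max; case: ifP.
split; first by split; [split|apply: final_arith].
move=> rH; apply/le_anti; rewrite hup /= /lam ge_max !gE.
have [N1 HN1] := @reg1 S x0 inv kappa L1 L2 HL1 rH.
have [N2 HN2] := @reg2 S x0 inv invK kappa L1 L2 HL2 rH.
by rewrite (@GL_R R _ _ _ (ne _) HN1) (@GL_R R _ _ _ (ne _) HN2).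
Qed.
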